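(* Let $d\in\{2,3\}$ and let $k^1,\dots,k^{d+1}\in\mathbb{Z}^d_0$ be given by $k^1=(0,1)$, $k^2=(1,0)$, $k^3=(1,1)$ when $d=2$, and $k^1=(0,0,1)$, $k^2=(0,1,0)$, $k^3=(1,0,0)$, $k^4=(1,1,1)$ when $d=3$. Let $K=\{k^1,\dots,k^{d+1}\}\cup\{-k^1,\dots,-k^{d+1}\}$. For $k\in\mathbb{Z}^d_0$ and $i\in\{1,\dots,d-1\}$ define the vector field on $\mathbb{T}^d\times SL_d(\mathbb{R})$ \[ Z_{k,i}(x,A)=\begin{pmatrix}e_k(x)\gamma_k^i\\ e_{-k}(x)(\gamma_k^i\otimes k)A\end{pmatrix}\in T_x\mathbb{T}^d\times T_ASL_d(\mathbb{R}). \] Then at each $(x,A)\in\mathbb{T}^d\times SL_d(\mathbb{R})$, \[ \operatorname{Span}\{Z_{k,i}(x,A):k\in K,\ i\in\{1,\dots,d-1\}\}=T_x\mathbb{T}^d\times T_ASL_d(\mathbb{R}). \]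
   Context: $\mathbb{T}^d=[0,2\pi]^d$ periodic; $\mathbb{Z}^d_+=\{k: k_d>0\}\cup\{k: k_1>0,k_d=0\}$, $\mathbb{Z}^d_-=-\mathbb{Z}^d_+$, $\mathbb{Z}^d_0=\mathbb{Z}^d\setminus\{0\}$; $e_k(x)=\sin(k\cdot x)$ for $k\in\mathbb{Z}^d_+$ and $\cos(k\cdot x)$ for $k\in\mathbb{Z}^d_-$. For each $k\in\mathbb{Z}^d_0$, $\gamma_k$ is a $d\times(d-1)$ matrix with columns $\gamma_k^1,\dots,\gamma_k^{d-1}$, $\gamma_k^\top k=0$, $\gamma_k^\top\gamma_k=\mathrm{Id}$, $\gamma_{-k}=-\gamma_k$. $\gamma\otimes k$ denotes the matrix $\gamma k^\top$. (These $Z_{k,i}$ are the Lie brackets $[e_k\gamma_k^i,G]$ with the drift $G$ of $\dot x=u(x)$, $\dot A=\nabla u(x)A$.) *)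

(* Defs.v *)
From HB Require Import structures.
From mathcomp Require Import all_boot all_order all_algebra.
From mathcomp Require Import reals trigo.
Set Implicit Arguments. Unset Strict Implicit. Unset Printing Implicit Defensive.
Import Order.TTheory GRing.Theory Num.Theory.
Local Open Scope ring_scope.

Definition kR (R : realType) (d : nat) (k : 'cV[int]_d) : 'cV[R]_d := map_mx intr k.

(* Z^d_+ : the sign of the last non-zero coordinate is positive
   (for d = 2 this is exactly {k_2 > 0} u {k_1 > 0, k_2 = 0}). *)
Definition posZ (d : nat) (k : 'cV[int]_d) : bool :=
  [exists i : 'I_d, (0 < k i 0) && [forall j : 'I_d, (i < j)%N ==> (k j 0 == 0)]].

Definition kdot (R : realType) (d : nat) (k : 'cV[int]_d) (x : 'cV[R]_d) : R :=
  \sum_(l < d) (kR R k) l 0 * x l 0.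

Definition ek (R : realType) (d : nat) (k : 'cV[int]_d) (x : 'cV[R]_d) : R :=
  if posZ k then sin (kdot k x) else cos (kdot k x).

Definition gamma_ok (R : realType) (d : nat) (gamma : 'cV[int]_d -> 'M[R]_(d, d.-1)) : Prop :=
  forall k : 'cV[int]_d, k != 0 ->
    [/\ (gamma k)^T *m kR R k = 0,
        (gamma k)^T *m gamma k = 1%:M &
        gamma (- k) = - gamma k].

(* the vectors k^1, ..., k^{d+1}: k^j = e_{d+1-j} for j <= d, k^{d+1} = (1,...,1) *)
Definition kvec (d : nat) (j : 'I_d.+1) : 'cV[int]_d :=
  \col_(l < d) (if (j < d)%N then ((l : nat) == (d - 1 - j)%N)%:R else 1).

Definition Kseq (d : nat) : seq 'cV[int]_d :=
  [seq kvec j | j <- enum 'I_d.+1] ++ [seq - kvec j | j <- enum 'I_d.+1].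

Definition Zfield (R : realType) (d : nat) (gamma : 'cV[int]_d -> 'M[R]_(d, d.-1))
  (k : 'cV[int]_d) (i : 'I_d.-1) (x : 'cV[R]_d) (A : 'M[R]_d) : 'cV[R]_d * 'M[R]_d :=
  (ek k x *: col i (gamma k),
   ek (- k) x *: (col i (gamma k) *m (kR R k)^T *m A)).

Definition Zseq (R : realType) (d : nat) (gamma : 'cV[int]_d -> 'M[R]_(d, d.-1))
  (x : 'cV[R]_d) (A : 'M[R]_d) : seq ('cV[R]_d * 'M[R]_d) :=
  [seq Zfield gamma k i x A | k <- Kseq d, i <- enum 'I_d.-1].

(* T_A SL_d(R) = kernel of the differential of det at A: B |-> tr(adj(A) B) *)
Definition tangentSL (R : realType) (d : nat) (A B : 'M[R]_d) : bool :=
  \tr (\adj A *m B) == 0.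

(* Main.v *)
Require Import Defs.
From HB Require Import structures.
From mathcomp Require Import all_boot all_order all_algebra.
From mathcomp Require Import reals trigo zify.
Import Order.TTheory GRing.Theory Num.Theory.
Local Open Scope ring_scope.
Set Implicit Arguments. Unset Strict Implicit. Unset Printing Implicit Defensive.

Lemma proj_lem (R : realType) (n : nat) (g : 'M[R]_(n.+1, n)) (k v : 'cV[R]_(n.+1)) :
  g^T *m g = 1%:M -> g^T *m k = 0 -> (k^T *m k) 0 0 != 0 -> k^T *m v = 0 ->
  g *m (g^T *m v) = v.
Proof.
move=> hgg hgk hkk hkv.
pose Q := row_mx k g.
have hkg : k^T *m g = 0 by rewrite -[g]trmxK -trmx_mul hgk trmx0.
have hQ : Q^T *m Q = block_mx (k^T *m k) 0 0 1%:M.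
  by rewrite /Q tr_row_mx mul_col_row hkg hgk hgg.
have hU : Q^T \in unitmx.
  have : Q^T *m Q \in unitmx.
    by rewrite unitmxE hQ det_ublock det1 mulr1 det_mx11 unitfE.
  by rewrite unitmx_mul => /andP[].
set u := v - g *m (g^T *m v).
have hu : Q^T *m u = 0.
  rewrite /Q tr_row_mx mul_col_mx /u !mulmxBr !mulmxA hkg hgg mul0mx mul1mx hkv.
  by rewrite !subrr ?mul0mx ?subrr col_mx0.
have : u = 0.
  by rewrite -(mulKmx hU u) hu mulmx0.
by move/eqP; rewrite subr_eq0 => /eqP.
Qed.
Section H.
Variable R : realType.
Variable n : nat.

Lemma kRN (k : 'cV[int]_n) : kR R (- k) = - kR R k.
Proof. by apply/matrixP => i j; rewrite !mxE rmorphN. Qed.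

Lemma kR_delta (l : 'I_n) : kR R (delta_mx l 0) = delta_mx l 0.
Proof. by apply/matrixP => i j; rewrite !mxE rmorph_nat. Qed.

Lemma kR_const : kR R (const_mx 1 : 'cV[int]_n) = const_mx 1.
Proof. by apply/matrixP => i j; rewrite !mxE rmorph1. Qed.

Lemma kdotN (k : 'cV[int]_n) (x : 'cV[R]_n) : kdot (- k) x = - kdot k x.
Proof.
rewrite /kdot kRN -sumrN; apply: eq_bigr => i _; by rewrite mxE mulNr.
Qed.

Lemma ek2 (k : 'cV[int]_n) x : posZ k -> ~~ posZ (- k) ->
  ek k x ^+ 2 + ek (- k) x ^+ 2 = 1 :> R.
Proof.
move=> hp hn; rewrite /ek hp (negbTE hn) kdotN cosN.
by rewrite addrC cos2Dsin2.
Qed.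

Lemma posZ_delta (l : 'I_n) : posZ (delta_mx l 0 : 'cV[int]_n).
Proof.
apply/existsP; exists l; rewrite mxE !eqxx /=; apply/forallP => j.
apply/implyP => hj; rewrite mxE.
have -> : (j == l) = false by apply/negbTE; rewrite neq_ltn hj orbT.
by [].
Qed.

Lemma posZN_delta (l : 'I_n) : ~~ posZ (- delta_mx l 0 : 'cV[int]_n).
Proof.
apply/negP => /existsP [i /andP [h _]]; move: h; rewrite !mxE.
by case: (_ && _).
Qed.

Lemma posZN_const : ~~ posZ (- const_mx 1 : 'cV[int]_n).
Proof. by apply/negP => /existsP [i /andP [h _]]; move: h; rewrite !mxE. Qed.

Lemma delta_neq0 (l : 'I_n) : (delta_mx l 0 : 'cV[int]_n) != 0.
Proof. by apply/eqP => /matrixP /(_ l 0); rewrite !mxE !eqxx. Qed.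

Lemma mulmx_sum_col m p (g : 'M[R]_(m, p)) (w : 'cV[R]_p) :
  g *m w = \sum_i w i 0 *: col i g.
Proof.
apply/matrixP => a b; rewrite !mxE summxE; apply: eq_bigr => i _.
by rewrite !mxE (ord1 b) mulrC.
Qed.

End H.

Lemma posZ_const n : posZ (const_mx 1 : 'cV[int]_n.+1).
Proof.
apply/existsP; exists ord_max; rewrite mxE /=.
apply/forallP => j; apply/implyP => hj.
by move: (ltn_ord j); rewrite ltnS leqNgt hj.
Qed.

Lemma const_neq0 n : (const_mx 1 : 'cV[int]_n.+1) != 0.
Proof. by apply/eqP => /matrixP /(_ ord0 0); rewrite !mxE. Qed.

Lemma kvec_delta n (l : 'I_n.+1) : kvec (inord (n - l) : 'I_n.+2) = delta_mx l 0.
Proof.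
apply/matrixP => i j; rewrite !mxE (ord1 j) eqxx andbT inordK; last first.
  by lia.
rewrite ltnS leq_subr subn1 /= subKn; last by rewrite -ltnS.
by [].
Qed.

Lemma kvec_max n : kvec (ord_max : 'I_n.+2) = const_mx 1.
Proof. by apply/matrixP => i j; rewrite !mxE ltnn. Qed.

Lemma kvec_cases n (j : 'I_n.+2) :
  (exists l : 'I_n.+1, kvec j = delta_mx l 0) \/ kvec j = const_mx 1.
Proof.
case: (ltnP j n.+1) => hj.
  left; exists (inord (n - j)); apply/matrixP => a b.
  rewrite !mxE (ord1 b) eqxx andbT hj.
  have h : (n - j < n.+1)%N by lia.
  by rewrite -(inj_eq val_inj) /= inordK // subn1.
right; have -> : j = ord_max by apply/val_inj => /=; apply/eqP; rewrite eqn_leq hj -ltnS ltn_ord.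
exact: kvec_max.
Qed.

Section Pairs.
Variable R : realType.
Variable m : nat.
Implicit Types (U : {vspace ('cV[R]_m * 'M[R]_m)}).

Lemma pairZ (a : R) (u : 'cV[R]_m) (M : 'M[R]_m) : a *: (u, M) = (a *: u, a *: M).
Proof. by []. Qed.
Lemma pairD (u v : 'cV[R]_m) (M N : 'M[R]_m) : (u, M) + (v, N) = (u + v, M + N).
Proof. by []. Qed.
Lemma pairN (u : 'cV[R]_m) (M : 'M[R]_m) : - (u, M) = (- u, - M).
Proof. by []. Qed.

Lemma fstZ U (a : R) v : (v, 0) \in U -> (a *: v, 0) \in U.
Proof. by move=> h; have := memvZ a h; rewrite pairZ scaler0. Qed.
Lemma sndZ U (a : R) M : (0, M) \in U -> (0, a *: M) \in U.
Proof. by move=> h; have := memvZ a h; rewrite pairZ scaler0. Qed.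
Lemma fstD U u v : (u, 0) \in U -> (v, 0) \in U -> (u + v, 0) \in U.
Proof. by move=> h1 h2; have := memvD h1 h2; rewrite pairD addr0. Qed.
Lemma sndD U M N : (0, M) \in U -> (0, N) \in U -> (0, M + N) \in U.
Proof. by move=> h1 h2; have := memvD h1 h2; rewrite pairD addr0. Qed.

Lemma fst_sum U (I : finType) (F : I -> 'cV[R]_m) :
  (forall i, (F i, 0) \in U) -> (\sum_i F i, 0) \in U.
Proof.
move=> h; apply: (big_ind (fun v => (v, 0) \in U)) => //.
- exact: mem0v.
- by move=> ? ?; apply: fstD.
Qed.
Lemma snd_sum U (I : finType) (F : I -> 'M[R]_m) :
  (forall i, (0, F i) \in U) -> (0, \sum_i F i) \in U.
Proof.
move=> h; apply: (big_ind (fun v => (0, v) \in U)) => //.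
- exact: mem0v.
- by move=> ? ?; apply: sndD.
Qed.
End Pairs.

Section Main.
Variable R : realType.
Variable n : nat.
Hypothesis hn : (0 < n)%N.
Variable gamma : 'cV[int]_n.+1 -> 'M[R]_(n.+1, n).
Hypothesis hgamma : gamma_ok gamma.
Variable x : 'cV[R]_n.+1.
Variable A : 'M[R]_n.+1.
Hypothesis hA : \det A = 1.

Local Notation V := (<<Zseq gamma x A>>%VS).

Lemma Kseq_neq0 k : k \in Kseq n.+1 -> k != 0.
Proof.
rewrite mem_cat => /orP [] /mapP [j _ ->]; case: (kvec_cases j) => [[l ->]| ->];
  by rewrite ?oppr_eq0 ?delta_neq0 ?const_neq0.
Qed.

Lemma Kseq_delta (l : 'I_n.+1) : delta_mx l 0 \in Kseq n.+1.
Proof. by rewrite mem_cat -kvec_delta map_f // mem_enum. Qed.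
Lemma Kseq_deltaN (l : 'I_n.+1) : - delta_mx l 0 \in Kseq n.+1.
Proof.
rewrite mem_cat -kvec_delta; apply/orP; right.
by apply: (map_f (fun j => - kvec j)); rewrite mem_enum.
Qed.
Lemma Kseq_const : const_mx 1 \in Kseq n.+1.
Proof. by rewrite mem_cat -kvec_max map_f // mem_enum. Qed.
Lemma Kseq_constN : - const_mx 1 \in Kseq n.+1.
Proof.
rewrite mem_cat -kvec_max; apply/orP; right.
by apply: (map_f (fun j => - kvec j)); rewrite mem_enum.
Qed.

Lemma Zin k i : k \in Kseq n.+1 -> Zfield gamma k i x A \in V.
Proof.
move=> hk; apply: memv_span; apply/allpairsP; exists (k, i); split => //.
by rewrite mem_enum.
Qed.

Lemma trmxN p q (M : 'M[R]_(p, q)) : (- M)^T = - M^T.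
Proof. by apply/matrixP => a b; rewrite !mxE. Qed.

Lemma colN p q (M : 'M[R]_(p, q)) i : col i (- M) = - col i M.
Proof. by apply/matrixP => a b; rewrite !mxE. Qed.

Section Good.
Variable k : 'cV[int]_n.+1.
Hypotheses (hk1 : k \in Kseq n.+1) (hk2 : - k \in Kseq n.+1)
  (hp : posZ k) (hnp : ~~ posZ (- k))
  (hkk : ((kR R k)^T *m kR R k) 0 0 != 0).

Lemma gen i : (col i (gamma k), 0) \in V /\
   (0, col i (gamma k) *m (kR R k)^T *m A) \in V.
Proof.
have hk0 := Kseq_neq0 hk1.
have [h1 h2 hN] := hgamma hk0.
have Z1 := Zin i hk1; have Z2 := Zin i hk2.
rewrite /Zfield opprK hN kRN colN trmxN mulNmx mulmxN opprK in Z2.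
rewrite /Zfield in Z1.
set a := ek k x in Z1 Z2; set b := ek (- k) x in Z1 Z2.
have e2 : a ^+ 2 + b ^+ 2 = 1 by apply: ek2.
split.
- have := memvB (memvZ a Z1) (memvZ b Z2).
  rewrite !pairZ pairN pairD !scalerN !scalerA opprK -scalerDl -!expr2 e2 scale1r.
  by rewrite [b * a]mulrC subrr.
- have := memvD (memvZ b Z1) (memvZ a Z2).
  rewrite !pairZ pairD !scalerN !scalerA [b * a]mulrC subrr -scalerDl.
  by rewrite -!expr2 [b ^+ 2 + _]addrC e2 scale1r.
Qed.

Lemma orth v : (kR R k)^T *m v = 0 ->
  (v, 0) \in V /\ (0, v *m (kR R k)^T *m A) \in V.
Proof.
move=> hv.
have hk0 := Kseq_neq0 hk1.
have [h1 h2 hN] := hgamma hk0.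
have hp' := proj_lem h2 h1 hkk hv.
rewrite -hp' mulmx_sum_col; split.
- by apply: fst_sum => i; apply: fstZ; case: (gen i).
- rewrite !mulmx_suml; apply: snd_sum => i; rewrite -!scalemxAl.
  by apply: sndZ; case: (gen i).
Qed.
End Good.

Lemma hkk_delta (l : 'I_n.+1) :
  ((kR R (delta_mx l 0))^T *m kR R (delta_mx l 0)) 0 0 != 0.
Proof. by rewrite kR_delta trmx_delta mul_delta_mx mxE !eqxx oner_eq0. Qed.

Lemma hkk_const : ((kR R (const_mx 1))^T *m kR R (const_mx 1 : 'cV[int]_n.+1)) 0 0 != 0.
Proof.
rewrite kR_const trmx_const mxE; under eq_bigr do rewrite !mxE mulr1.
by rewrite sumr_const card_ord pnatr_eq0.
Qed.

Lemma orth_delta (l : 'I_n.+1) v : (delta_mx 0 l : 'rV[R]_n.+1) *m v = 0 ->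
  (v, 0) \in V /\ (0, v *m delta_mx 0 l *m A) \in V.
Proof.
move=> h.
have := @orth (delta_mx l 0) (Kseq_delta l) (Kseq_deltaN l) (posZ_delta l)
  (posZN_delta l) (hkk_delta l) v.
by rewrite kR_delta trmx_delta; apply.
Qed.

Lemma orth_const v : (const_mx 1 : 'rV[R]_n.+1) *m v = 0 ->
  (0, v *m (const_mx 1 : 'rV[R]_n.+1) *m A) \in V.
Proof.
move=> h.
have := @orth (const_mx 1) Kseq_const Kseq_constN (posZ_const n)
  (posZN_const n.+1) hkk_const v.
by rewrite kR_const trmx_const => /(_ h) [].
Qed.

Lemma E1 (j : 'I_n.+1) : (delta_mx j 0, 0) \in V.
Proof.
pose l : 'I_n.+1 := if j == 0 then inord 1 else 0.
have hl : l != j.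
  rewrite /l; have [->|hj] := eqVneq j 0; last by rewrite eq_sym.
  apply/eqP => /(congr1 val); rewrite /= inordK //; lia.
have [] // := @orth_delta l (delta_mx j 0).
by rewrite mul_delta_mx_cond (negbTE hl) mulr0n.
Qed.

Lemma E2 (a b : 'I_n.+1) : a != b -> (0, delta_mx a b *m A) \in V.
Proof.
move=> hab.
have [] // := @orth_delta b (delta_mx a 0).
  by rewrite mul_delta_mx_cond eq_sym (negbTE hab) mulr0n.
by rewrite mul_delta_mx.
Qed.

Lemma E3 (a : 'I_n.+1) :
  (0, (delta_mx a 0 - delta_mx 0 0 : 'cV[R]_n.+1) *m (const_mx 1 : 'rV[R]_n.+1) *m A) \in V.
Proof.
apply: orth_const.
by rewrite mulmxBr -!colE !col_const subrr.
Qed.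

Lemma traceless (M : 'M[R]_n.+1) : \tr M = 0 -> (0, M *m A) \in V.
Proof.
move=> htr.
have htr' : \sum_a M a a = 0 := htr.
pose X a : 'M[R]_n.+1 :=
  (delta_mx a 0 - delta_mx 0 0 : 'cV[R]_n.+1) *m (const_mx 1 : 'rV[R]_n.+1).
have hX : forall a c b, X a c b = (c == a)%:R - (c == 0)%:R.
  by move=> a c b; rewrite /X mxE big_ord1 !mxE mulr1 !eqxx !andbT.
pose N := M - \sum_a M a a *: X a.
have hNd : forall c, N c c = 0.
  move=> c; rewrite /N !mxE summxE.
  under eq_bigr => a _ do rewrite mxE hX mulrBr.
  rewrite sumrB -mulr_suml htr' mul0r subr0.
  rewrite (bigD1 c) //= eqxx mulr1 big1 ?addr0 ?subrr // => a hac.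
  by rewrite eq_sym (negbTE hac) mulr0.
have hM : M = N + \sum_a M a a *: X a by rewrite /N subrK.
rewrite hM mulmxDl; apply: sndD.
- rewrite (matrix_sum_delta N) !mulmx_suml; apply: snd_sum => c.
  rewrite mulmx_suml; apply: snd_sum => b.
  have [<-|hcb] := eqVneq c b.
    by rewrite hNd scale0r mul0mx; apply: mem0v.
  by rewrite -scalemxAl; apply: sndZ; apply: E2.
- rewrite mulmx_suml; apply: snd_sum => a.
  by rewrite -scalemxAl; apply: sndZ; apply: E3.
Qed.

Lemma kTcol k j : k \in Kseq n.+1 -> (kR R k)^T *m col j (gamma k) = 0.
Proof.
move=> hk; have [h1 _ _] := hgamma (Kseq_neq0 hk).
by rewrite -[col _ _]trmxK -trmx_mul tr_col -row_mul h1 row0 trmx0.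
Qed.

Lemma main_n w : (w \in V) = tangentSL A w.2.
Proof.
apply/idP/idP.
- move=> hw; have := coord_span (X := in_tuple (Zseq gamma x A)) hw.
  move=> ->; rewrite /tangentSL.
  rewrite (big_morph snd (id1 := 0) (op1 := +%R)) //.
  rewrite mulmx_sumr linear_sum /=; apply/eqP; apply: big1 => i _.
  have : (in_tuple (Zseq gamma x A))`_i \in Zseq gamma x A by apply: mem_nth.
  case/allpairsP => [[k j] [/= hk _ ->]].
  have E c c' (B : 'M[R]_n.+1) :
    \tr (\adj A *m (c *: (c' *: B))) = c * (c' * \tr (\adj A *m B)).
    by rewrite -!scalemxAr !mxtraceZ.
  apply: etrans (E _ _ _) _.
  suff -> : \tr (\adj A *m (col j (gamma k) *m (kR R k)^T *m A)) = 0 by rewrite !mulr0.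
  rewrite mxtrace_mulC -!mulmxA mul_mx_adj hA mulmx1 mxtrace_mulC kTcol //.
  exact: linear0.
- case: w => w1 w2 /= ht.
  have -> : (w1, w2) = (w1, 0) + (0, w2) by rewrite pairD addr0 add0r.
  apply: memvD.
  + rewrite (matrix_sum_delta w1); apply: fst_sum => i; rewrite big_ord1.
    by apply: fstZ; apply: E1.
  + have -> : w2 = (w2 *m \adj A) *m A by rewrite -mulmxA mul_adj_mx hA mulmx1.
    by apply: traceless; rewrite mxtrace_mulC; apply/eqP.
Qed.

End Main.

Unset Implicit Arguments.

Theorem lemma5p4 (R : realType) (d : nat) (hd : d = 2%N \/ d = 3%N)
  (gamma : 'cV[int]_d -> 'M[R]_(d, d.-1)) (hgamma : gamma_ok gamma)
  (x : 'cV[R]_d) (A : 'M[R]_d) (hA : \det A = 1) :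
  forall w : 'cV[R]_d * 'M[R]_d,
    (w \in <<Zseq gamma x A>>%VS) = tangentSL A w.2.
Proof.
case: d hd gamma hgamma x A hA => [|n]; first by case.
move=> hd gamma hgamma x A hA w.
have hn : (0 < n)%N by case: hd => -[->].
exact: main_n.
Qed.
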